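(* Let $W\in\mathbb{R}^{m\times n}$ have columns $w_1,\dots,w_n$, all nonzero, let $F:=WW^\top$ and $r:=\operatorname{rank}(W)=\operatorname{rank}(F)$. Define leverage scores $\ell_i:=w_i^\top F^+w_i$, fractional dimensionalities $D_i:=\|w_i\|^4/(w_i^\top Fw_i)$, and relative slack $\sigma_i:=1-D_i/\ell_i\in[0,1]$. Then: (1) $\sum_{i=1}^n\ell_i=r$; (2) $D_i\le\ell_i$ for all $i$, with equality iff the spectral measure $\mu_i$ is a Dirac mass, equivalently iff $w_i$ is an eigenvector of $F$; (3) $r-\sum_{i=1}^nD_i=\sum_{i=1}^n(\ell_i-D_i)=\sum_{i=1}^n\ell_i\sigma_i$; in particular, if $r=m$ then $m-\sum_iD_i=\sum_i\ell_i\sigma_i$.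
   Context: $F^+$ is the Moore–Penrose pseudoinverse of $F$. Writing $F=\sum_{k:\lambda_k>0}\lambda_kP_k$ on $\operatorname{Im}(F)$ with $P_k$ the orthogonal projectors onto the eigenspaces for distinct positive eigenvalues $\lambda_k$, the spectral measure of $w_i$ is $\mu_i:=\sum_{k}\frac{\|P_kw_i\|^2}{\|w_i\|^2}\delta_{\lambda_k}$. *)

(* Defs.v *)
From HB Require Import structures.
From mathcomp Require Import all_boot all_order all_algebra.
From mathcomp Require Import reals.
Set Implicit Arguments. Unset Strict Implicit. Unset Printing Implicit Defensive.
Import Order.TTheory GRing.Theory Num.Theory.
Local Open Scope ring_scope.

Section Defs.
Variable R : realType.

Definition dotc m (u v : 'cV[R]_m) : R := (u^T *m v) 0 0.

(* Moore-Penrose pseudoinverse: X is THE pseudoinverse of A iff it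
   satisfies the four Penrose equations (it exists and is unique). *)
Definition is_MP_pinv m n (A : 'M[R]_(m, n)) (X : 'M[R]_(n, m)) : Prop :=
  [/\ A *m X *m A = A, X *m A *m X = X,
      (A *m X)^T = A *m X & (X *m A)^T = X *m A].

(* Orthogonal projector onto the (row) space spanned by the rows of E:
   with B := row_base E (row-free), P = B^T (B B^T)^{-1} B.  P is symmetric,
   so it is also the orthogonal projector onto the same subspace of column
   vectors. *)
Definition oproj n (E : 'M[R]_n) : 'M[R]_n :=
  (row_base E)^T *m invmx (row_base E *m (row_base E)^T) *m row_base E.

(* Spectral measure of w w.r.t. symmetric F, as a finitely supported point-mass
   function on R: mu({lam}) = ||P_lam w||^2/||w||^2 for each positive
   eigenvalue lam of F (P_lam = orthogonal projector on its eigenspace),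
   and 0 elsewhere. *)
Definition spec_meas m (F : 'M[R]_m) (w : 'cV[R]_m) (lam : R) : R :=
  if (0 < lam) && eigenvalue F lam then
    dotc (oproj (eigenspace F lam) *m w) (oproj (eigenspace F lam) *m w)
      / dotc w w
  else 0.

Definition is_dirac (mu : R -> R) : Prop :=
  exists lam0 : R, forall lam, mu lam = (lam == lam0)%:R.

End Defs.

(* Main.v *)
Require Import Defs.
From HB Require Import structures.
From mathcomp Require Import all_boot all_order all_algebra.
From mathcomp Require Import reals.
From mathcomp Require Import ring lra zify.
Import Order.TTheory GRing.Theory Num.Theory.
Local Open Scope ring_scope.

Section Help.
Set Implicit Arguments. Unset Strict Implicit. Unset Printing Implicit Defensive.
Variable R : realType.

Lemma colM m n p (A : 'M[R]_(m, n)) (B : 'M[R]_(n, p)) i :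
  col i (A *m B) = A *m col i B.
Proof. by apply/matrixP=> a b; rewrite !mxE; apply: eq_bigr => k _; rewrite !mxE. Qed.

Lemma dotcE m (u v : 'cV[R]_m) : dotc u v = \sum_k u k 0 * v k 0.
Proof. by rewrite /dotc mxE; apply: eq_bigr => k _; rewrite mxE. Qed.

Lemma dotcC m (u v : 'cV[R]_m) : dotc u v = dotc v u.
Proof. by rewrite !dotcE; apply: eq_bigr => k _; rewrite mulrC. Qed.

Lemma dotc_ge0 m (u : 'cV[R]_m) : 0 <= dotc u u.
Proof. by rewrite dotcE sumr_ge0 // => k _; rewrite -expr2 sqr_ge0. Qed.

Lemma dotc_eq0 m (u : 'cV[R]_m) : dotc u u = 0 -> u = 0.
Proof.
rewrite dotcE => /eqP; rewrite psumr_eq0 => [/allP H|k _]; last by rewrite -expr2 sqr_ge0.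
apply/matrixP => k j; rewrite (ord1 j) mxE.
by have /(_ (mem_index_enum k)) := H k; rewrite implyTb mulf_eq0 orbb => /eqP.
Qed.

Lemma dotcMl m k (A : 'M[R]_(k, m)) (u : 'cV[R]_m) v :
  dotc (A *m u) v = dotc u (A^T *m v).
Proof. by rewrite /dotc trmx_mul mulmxA. Qed.

Lemma dotcMr m k (A : 'M[R]_(m, k)) (u : 'cV[R]_m) v :
  dotc u (A *m v) = dotc (A^T *m u) v.
Proof. by rewrite dotcMl trmxK. Qed.

Lemma dotcBl m (u v w : 'cV[R]_m) : dotc (u - v) w = dotc u w - dotc v w.
Proof. by rewrite !dotcE -sumrB; apply: eq_bigr => k _; rewrite !mxE mulrBl. Qed.
Lemma dotcBr m (u v w : 'cV[R]_m) : dotc w (u - v) = dotc w u - dotc w v.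
Proof. by rewrite dotcC dotcBl !(dotcC w). Qed.
Lemma dotcZl m a (u w : 'cV[R]_m) : dotc (a *: u) w = a * dotc u w.
Proof. by rewrite !dotcE mulr_sumr; apply: eq_bigr => k _; rewrite !mxE mulrA. Qed.
Lemma dotcZr m a (u w : 'cV[R]_m) : dotc w (a *: u) = a * dotc w u.
Proof. by rewrite dotcC dotcZl dotcC. Qed.
Lemma dotc0r m (u : 'cV[R]_m) : dotc u 0 = 0.
Proof. by rewrite /dotc mulmx0 mxE. Qed.

Lemma CS m (a b : 'cV[R]_m) : dotc a a != 0 ->
  dotc a b ^+ 2 <= dotc a a * dotc b b /\
  (dotc a b ^+ 2 = dotc a a * dotc b b -> b = (dotc a b / dotc a a) *: a).
Proof.
move=> aa0; set t := dotc a b / dotc a a.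
have E : dotc (b - t *: a) (b - t *: a) = dotc b b - dotc a b ^+ 2 / dotc a a.
  rewrite !dotcBl !dotcBr !dotcZl !dotcZr (dotcC b a) /t; field; exact: aa0.
have aap : 0 < dotc a a by rewrite lt0r aa0 dotc_ge0.
split.
  have := dotc_ge0 (b - t *: a); rewrite E subr_ge0 ler_pdivrMr //.
  by rewrite mulrC.
move=> H; apply/eqP; rewrite -subr_eq0; apply/eqP; apply: dotc_eq0.
rewrite E H; field; exact: aa0.
Qed.

Lemma AAT0 m n (A : 'M[R]_(m, n)) : A *m A^T = 0 -> A = 0.
Proof.
move=> H; apply/matrixP => i j; rewrite mxE.
have : dotc (row i A)^T (row i A)^T = 0.
  rewrite dotcE; transitivity ((A *m A^T) i i); last by rewrite H mxE.
  by rewrite mxE; apply: eq_bigr => k _; rewrite !mxE.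
move/dotc_eq0/matrixP => /(_ j 0); by rewrite !mxE.
Qed.

End Help.

Section Help2.
Set Implicit Arguments. Unset Strict Implicit. Unset Printing Implicit Defensive.
Variable R : realType.

Lemma rank_AAT m n (W : 'M[R]_(m, n)) : \rank (W *m W^T) = \rank W.
Proof.
have E : (kermx (W *m W^T) == kermx W)%MS.
  apply/andP; split; rewrite sub_kermx.
    have := submx_refl (kermx (W *m W^T)); rewrite sub_kermx => /eqP H.
    apply/eqP; apply: AAT0; rewrite trmx_mul !mulmxA -(mulmxA _ W) H mul0mx //.
  have := submx_refl (kermx W); rewrite sub_kermx => /eqP H.
  by rewrite mulmxA H mul0mx.
have := eqmx_rank E; rewrite !mxrank_ker.
have := rank_leq_row W; have := rank_leq_row (W *m W^T); lia.
Qed.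

Lemma trAAT m n (W : 'M[R]_(m, n)) : (W *m W^T)^T = W *m W^T.
Proof. by rewrite trmx_mul trmxK. Qed.

Lemma pinv_W m n (W : 'M[R]_(m, n)) Fp :
  is_MP_pinv (W *m W^T) Fp -> W *m W^T *m Fp *m W = W.
Proof.
case=> H1 _ H3 _; set F := W *m W^T in H1 H3 *.
set P := F *m Fp in H1 H3 *.
have PF : P *m F = F by [].
have FT : F^T = F := trAAT W.
have FP : F *m P = F by rewrite -{1}H3 -{1}FT -trmx_mul PF FT.
have e2 : (P *m W) *m W^T = F by rewrite -mulmxA PF.
have e1 : (P *m W) *m (P *m W)^T = F by rewrite trmx_mul H3 mulmxA e2 FP.
have e3 : W *m (P *m W)^T = F by rewrite trmx_mul H3 mulmxA FP.
apply/eqP; rewrite -subr_eq0; apply/eqP; apply: AAT0.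
by rewrite linearB /= mulmxBl !mulmxBr e1 e2 e3 !subrr.
Qed.

Lemma idem_fact n r (C : 'M[R]_(n, r)) (D : 'M[R]_(r, n)) L :
  L *m C = 1%:M -> row_free D -> (C *m D) *m (C *m D) = C *m D -> D *m C = 1%:M.
Proof.
move=> LC fD QQ; apply: (row_free_inj fD) => /=.
rewrite mul1mx -[in RHS](mul1mx D) -LC.
transitivity (L *m ((C *m D) *m (C *m D))); last by rewrite QQ mulmxA.
by rewrite !mulmxA LC mul1mx.
Qed.

Lemma tr_idem n (Q : 'M[R]_n) : Q *m Q = Q -> \tr Q = (\rank Q)%:R.
Proof.
move=> QQ.
have CD := mulmx_base Q.
have [L LC] := row_fullP (col_base_full Q).
have DC : row_base Q *m col_base Q = 1%:M.
  by apply: (idem_fact LC (row_base_free Q)); rewrite CD.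
by rewrite -{1}CD mxtrace_mulC DC mxtrace1.
Qed.

End Help2.

Section Help3.
Set Implicit Arguments. Unset Strict Implicit. Unset Printing Implicit Defensive.
Variable R : realType.

Lemma BBt_unit r k (B : 'M[R]_(r, k)) : row_free B -> B *m B^T \in unitmx.
Proof. by rewrite -row_free_unit /row_free rank_AAT. Qed.

Definition projB r k (B : 'M[R]_(r, k)) := B^T *m invmx (B *m B^T) *m B.

Lemma projB_BT r k (B : 'M[R]_(r, k)) : row_free B -> projB B *m B^T = B^T.
Proof.
by move=> fB; rewrite /projB -!mulmxA (mulVmx (BBt_unit fB)) mulmx1.
Qed.

Lemma projB_idem r k (B : 'M[R]_(r, k)) : row_free B -> projB B *m projB B = projB B.
Proof. by move=> fB; rewrite {2}/projB !mulmxA projB_BT. Qed.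

Lemma projB_sym r k (B : 'M[R]_(r, k)) : (projB B)^T = projB B.
Proof. by rewrite /projB !trmx_mul trmxK trmx_inv trmx_mul trmxK mulmxA. Qed.

Lemma oprojE k (E : 'M[R]_k) : oproj E = projB (row_base E).
Proof. by []. Qed.

Lemma oproj_fix k (E : 'M[R]_k) (x : 'cV[R]_k) : (x^T <= E)%MS -> oproj E *m x = x.
Proof.
move=> H; have : (x^T <= row_base E)%MS by rewrite eq_row_base.
rewrite oprojE => /submxP [D HD].
by rewrite -[x]trmxK HD trmx_mul mulmxA projB_BT // row_base_free.
Qed.

Lemma oproj_zero k (E : 'M[R]_k) (x : 'cV[R]_k) : row_base E *m x = 0 -> oproj E *m x = 0.
Proof. by move=> H; rewrite oprojE /projB -mulmxA H mulmx0. Qed.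

Lemma oproj_range k (E : 'M[R]_k) (x : 'cV[R]_k) :
  oproj E *m x = (row_base E)^T *m (invmx (row_base E *m (row_base E)^T) *m row_base E *m x).
Proof. by rewrite oprojE /projB !mulmxA. Qed.

Lemma oproj_norm k (E : 'M[R]_k) (x : 'cV[R]_k) :
  dotc (oproj E *m x) (oproj E *m x) = dotc x (oproj E *m x).
Proof.
by rewrite dotcMl oprojE projB_sym mulmxA projB_idem // row_base_free.
Qed.

Lemma eig_rowsT r k (F : 'M[R]_k) (B : 'M[R]_(r, k)) a : F^T = F ->
  B *m F = a *: B -> F *m B^T = a *: B^T.
Proof. by move=> FT H; rewrite -[F]FT -trmx_mul H linearZ. Qed.

Lemma eig_rows k (F : 'M[R]_k) a : F^T = F ->
  F *m (row_base (eigenspace F a))^T = a *: (row_base (eigenspace F a))^T.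
Proof.
move=> FT; apply: eig_rowsT => //; apply/eigenspaceP.
by rewrite eq_row_base.
Qed.

End Help3.

Section Help4.
Set Implicit Arguments. Unset Strict Implicit. Unset Printing Implicit Defensive.
Variable R : realType.

Lemma dotc_neq0 k (w : 'cV[R]_k) : w != 0 -> dotc w w != 0.
Proof. by move=> wn; apply: contra wn => /eqP /dotc_eq0 ->. Qed.

Lemma spec_eig k (F : 'M[R]_k) (w : 'cV[R]_k) lam : F^T = F -> w != 0 -> 0 < lam ->
  F *m w = lam *: w -> forall l, spec_meas F w l = (l == lam)%:R.
Proof.
move=> FT wn lam0 Fw.
have wT : w^T *m F = lam *: w^T by rewrite -{1}FT -trmx_mul Fw linearZ.
have eigl : eigenvalue F lam.
  apply/eigenvalueP; exists w^T => //.
  by apply: contra wn => /eqP; rewrite -trmx0 => /trmx_inj ->.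
have ww := dotc_neq0 wn.
move=> l; rewrite /spec_meas; case: eqP => [->|ne].
  rewrite lam0 eigl /= oproj_fix ?divff //; exact/eigenspaceP.
case: ifP => // /andP [l0 el].
have HB : row_base (eigenspace F l) *m F = l *: row_base (eigenspace F l).
  by apply/eigenspaceP; rewrite eq_row_base.
have : row_base (eigenspace F l) *m w = 0.
  have : (lam - l) *: (row_base (eigenspace F l) *m w) = 0.
    rewrite scalerBl scalemxAr -Fw mulmxA HB -scalemxAl subrr //.
  move/eqP; rewrite scaler_eq0 subr_eq0 => /orP [/eqP E|/eqP //].
  by case: ne; rewrite E.
by move/oproj_zero => ->; rewrite dotc0r mul0r.
Qed.

Lemma spec_dirac k (F : 'M[R]_k) (w : 'cV[R]_k) lam : F^T = F -> w != 0 ->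
  spec_meas F w lam = 1 -> F *m w = lam *: w.
Proof.
move=> FT wn; have ww := dotc_neq0 wn.
rewrite /spec_meas; case: ifP => [_|_]; last by move/eqP; rewrite eq_sym oner_eq0.
set P := oproj _ => H.
have E1 : dotc (P *m w) (P *m w) = dotc w w by rewrite -[LHS](divfK ww) H mul1r.
have E2 : w = P *m w.
  apply/eqP; rewrite -subr_eq0; apply/eqP; apply: dotc_eq0.
  rewrite !dotcBl !dotcBr (dotcC (P *m w) w) -oproj_norm E1 -/P; lra.
rewrite E2 oproj_range mulmxA eig_rows // -scalemxAl -oproj_range.
by rewrite -E2.
Qed.

End Help4.

Section Help5.
Set Implicit Arguments. Unset Strict Implicit. Unset Printing Implicit Defensive.
Variable R : realType.

Lemma col_facts m n (W : 'M[R]_(m, n)) Fp (i : 'I_n) :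
  col i W != 0 -> is_MP_pinv (W *m W^T) Fp ->
  let F := W *m W^T in let w := col i W in
  let ell := dotc w (Fp *m w) in
  let D := dotc w w ^+ 2 / dotc w (F *m w) in
  [/\ 0 < ell, 0 <= D, D <= ell,
      (D = ell <-> is_dirac (spec_meas F w)) &
      (is_dirac (spec_meas F w) <-> exists lam : R, F *m w = lam *: w)].
Proof.
move=> wn pinv F w ell D.
have FT : F^T = F by apply: trAAT.
set u := Fp *m w; set a := W^T *m w; set b := W^T *m u.
have Fu : F *m u = w by rewrite /u /w mulmxA -colM pinv_W.
have Eaa : dotc w (F *m w) = dotc a a by rewrite /F -mulmxA dotcMr.
have Eab : dotc w w = dotc a b by rewrite -{2}Fu /F -mulmxA dotcMr.
have Ebb : ell = dotc b b by rewrite /ell -/u -{1}Fu /F -mulmxA dotcMl.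
have ww := dotc_neq0 wn.
have wwp : 0 < dotc w w by rewrite lt0r ww dotc_ge0.
have aa : dotc a a != 0.
  apply: contra ww => /eqP /dotc_eq0 a0; apply/eqP.
  by rewrite Eab a0 dotcC dotc0r.
have aap : 0 < dotc a a by rewrite lt0r aa dotc_ge0.
have [CS1 CS2] := CS b aa.
have ED : D = dotc a b ^+ 2 / dotc a a by rewrite /D Eaa Eab.
have Dge0 : 0 <= D by rewrite ED divr_ge0 ?sqr_ge0 ?ltW.
have DleE : D <= ell by rewrite ED Ebb ler_pdivrMr // mulrC.
have ellp : 0 < ell.
  apply: (lt_le_trans _ DleE); rewrite ED divr_gt0 // -Eab exprn_gt0 //.
have eig_pos : forall lam, F *m w = lam *: w -> 0 < lam.
  move=> lam Fw; have H : dotc a a = lam * dotc w w by rewrite -Eaa Fw dotcZr.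
  by move: aap; rewrite H pmulr_lgt0.
have eigD : forall lam, F *m w = lam *: w -> D = ell.
  move=> lam Fw; have lp := eig_pos _ Fw.
  have l0 : lam != 0 by rewrite gt_eqF.
  set v := u - lam^-1 *: w.
  have Fv : F *m v = 0.
    by rewrite mulmxBr Fu -scalemxAr Fw scalerA mulVf // scale1r subrr.
  have Wv : W^T *m v = 0.
    by apply: dotc_eq0; rewrite -dotcMr mulmxA -/F Fv dotc0r.
  have Eb : b = lam^-1 *: a.
    by apply/eqP; rewrite -subr_eq0 /a /b scalemxAr -mulmxBr; apply/eqP.
  rewrite ED Ebb Eb !dotcZr !dotcZl; move: (dotc a a) aa l0 => x xn l0; field.
  by rewrite l0 xn.
have Deig : D = ell -> exists lam, F *m w = lam *: w.
  move=> H.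
  have H2 : dotc a b ^+ 2 = dotc a a * dotc b b.
    by move: H; rewrite ED Ebb => <-; rewrite mulrC divfK.
  have Eb := CS2 H2; set t := dotc a b / dotc a a in Eb.
  have t0 : t != 0 by rewrite /t mulf_neq0 ?invr_neq0 // -Eab.
  exists t^-1.
  have E : w = t *: (F *m w) by rewrite -{1}Fu /F -mulmxA -/b Eb -scalemxAr mulmxA.
  by rewrite [in RHS]E scalerA mulVf // scale1r.
have dirE : is_dirac (spec_meas F w) <-> exists lam : R, F *m w = lam *: w.
  split.
    by case=> lam0 H; exists lam0; apply: spec_dirac FT wn _; rewrite H eqxx.
  by case=> lam Fw; exists lam; apply: spec_eig FT wn (eig_pos _ Fw) Fw.
split => //.
split; first by move/Deig/dirE.
by move/dirE => [lam /eigD].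
Qed.

End Help5.

Lemma dotc_col (R : realType) k m n (A : 'M[R]_(k, m)) (B : 'M[R]_(k, n)) i j :
  dotc (col i A) (col j B) = (A^T *m B) i j.
Proof. by rewrite dotcE mxE; apply: eq_bigr => l _; rewrite !mxE. Qed.

Theorem mainTheorem17 (R : realType) (m n : nat) (W : 'M[R]_(m, n))
    (Fp : 'M[R]_m) :
  (forall i : 'I_n, col i W != 0) ->
  is_MP_pinv (W *m W^T) Fp ->
  let F := W *m W^T in
  let r := \rank W in
  let ell := fun i : 'I_n => dotc (col i W) (Fp *m col i W) in
  let D := fun i : 'I_n =>
    (dotc (col i W) (col i W)) ^+ 2 / dotc (col i W) (F *m col i W) in
  let sigma := fun i : 'I_n => 1 - D i / ell i in
  \rank F = r /\
  (forall i : 'I_n, 0 <= sigma i <= 1) /\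
  (* (1) *)
  \sum_(i < n) ell i = r%:R /\
  (* (2) *)
  (forall i : 'I_n,
     D i <= ell i /\
     (D i = ell i <-> is_dirac (spec_meas F (col i W))) /\
     (is_dirac (spec_meas F (col i W)) <->
        exists lam : R, F *m col i W = lam *: col i W)) /\
  (* (3) *)
  (r%:R - \sum_(i < n) D i = \sum_(i < n) (ell i - D i) /\
   \sum_(i < n) (ell i - D i) = \sum_(i < n) ell i * sigma i) /\
  (r = m -> m%:R - \sum_(i < n) D i = \sum_(i < n) ell i * sigma i).
Proof.
move=> hW pinv F r ell D sigma.
have rF : \rank F = r := rank_AAT W.
have cf := fun i => col_facts (hW i) pinv.
have sum_ell : \sum_(i < n) ell i = r%:R.
  have E : \sum_(i < n) ell i = \tr (W^T *m (Fp *m W)).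
    by apply: eq_bigr => i _; rewrite /ell -colM dotc_col.
  rewrite E mxtrace_mulC -mulmxA -/F.
  have [P1 P2 _ _] := pinv.
  rewrite tr_idem; last by rewrite mulmxA P2. 
  congr (_%:R); rewrite -rF; apply/eqP; rewrite eqn_leq mxrankM_maxr /=.
  by rewrite /F -{1}P1 -mulmxA mxrankM_maxr.
have ell0 : forall i, ell i != 0.
  by move=> i; have [h _ _ _ _] := cf i; rewrite gt_eqF.
have s3 : \sum_(i < n) (ell i - D i) = \sum_(i < n) ell i * sigma i.
  apply: eq_bigr => i _; rewrite /sigma.
  move: (ell i) (D i) (ell0 i) => x y xn; field; exact: xn.
have s2 : r%:R - \sum_(i < n) D i = \sum_(i < n) (ell i - D i).
  by rewrite sumrB sum_ell.
split => //; split.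
  move=> i; have [h1 h2 h3 _ _] := cf i; rewrite /sigma.
  rewrite subr_ge0 ler_pdivrMr // mul1r h3 /= lerBlDr lerDl divr_ge0 // ltW //.
split => //; split.
  by move=> i; have [_ _ h3 h4 h5] := cf i.
split => //.
by move=> rm; rewrite -s3 -s2 -rm.
Qed.
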